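(* A ring $R$ is a CUNC ring if and only if $R$ is an abelian CSNC ring.
   Context: All rings are associative with identity $1$. For a ring $R$, $\mathrm{Id}(R)$, $U(R)$, $\mathrm{Nil}(R)$ denote the sets of idempotents, units and nilpotent elements. An element $a\in R$ is clean if $a=e+u$ for some $e\in\mathrm{Id}(R)$, $u\in U(R)$. An element $a$ is strongly nil-clean if $a=e+q$ with $e\in \mathrm{Id}(R)$, $q\in\mathrm{Nil}(R)$ and $eq=qe$; $a$ is uniquely nil-clean if there is exactly one $e\in\mathrm{Id}(R)$ with $a-e\in\mathrm{Nil}(R)$. A ring $R$ is called CSNC if every clean element of $R$ is strongly nil-clean, and CUNC if every clean element of $R$ is uniquely nil-clean. $R$ is abelian if all its idempotents are central. *)

(* Defs.v *)
From mathcomp Require Import all_boot all_order all_algebra.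
Set Implicit Arguments. Unset Strict Implicit. Unset Printing Implicit Defensive.
Import GRing.Theory.
Local Open Scope ring_scope.

Definition idem (R : unitRingType) (e : R) : Prop := e * e = e.
Definition nilp (R : unitRingType) (q : R) : Prop := exists n : nat, q ^+ n = 0.

Definition clean_elt (R : unitRingType) (a : R) : Prop :=
  exists e u : R, idem e /\ u \is a GRing.unit /\ a = e + u.

Definition strongly_nil_clean (R : unitRingType) (a : R) : Prop :=
  exists e q : R, idem e /\ nilp q /\ e * q = q * e /\ a = e + q.

Definition uniquely_nil_clean (R : unitRingType) (a : R) : Prop :=
  exists e : R, (idem e /\ nilp (a - e)) /\
    forall f : R, idem f -> nilp (a - f) -> f = e.

Definition CSNC (R : unitRingType) : Prop :=
  forall a : R, clean_elt a -> strongly_nil_clean a.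

Definition CUNC (R : unitRingType) : Prop :=
  forall a : R, clean_elt a -> uniquely_nil_clean a.

Definition abelian_ring (R : unitRingType) : Prop :=
  forall e : R, idem e -> forall x : R, e * x = x * e.

(* Main.v *)
Require Import Defs.
From mathcomp Require Import all_boot all_order all_algebra.
Import GRing.Theory.
Set Implicit Arguments. Unset Strict Implicit.
Local Open Scope ring_scope.

Lemma nil_high (R : unitRingType) (x : R) m k : x ^+ m = 0 -> (m <= k)%N -> x ^+ k = 0.
Proof. by move=> H /subnKC <-; rewrite exprD H mul0r. Qed.

Lemma nilp_add (R : unitRingType) (x y : R) :
  x * y = y * x -> Defs.nilp x -> Defs.nilp y -> Defs.nilp (x + y).
Proof.
move=> cxy [m Hm] [k Hk]; exists (m + k)%N.
rewrite exprDn_comm //; apply: big1 => [[i /=]]; rewrite ltnS => Hi _.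
case: (leqP k i) => Hki.
  by rewrite (nil_high Hk Hki) mulr0 mul0rn.
have: (m <= m + k - i)%N by rewrite -addnBA ?leq_addr // ltnW.
by move/(nil_high Hm) => ->; rewrite mul0r mul0rn.
Qed.

Lemma nilp_opp (R : unitRingType) (x : R) : Defs.nilp x -> Defs.nilp (- x).
Proof. by move=> [n Hn]; exists n; rewrite exprNn Hn mulr0. Qed.

Lemma idem_clean (R : unitRingType) (e : R) : idem e -> clean_elt e.
Proof.
move=> He; exists (1 - e), (e *+ 2 - 1); split; last split.
- by rewrite /idem mulrBl mul1r mulrBr mulr1 He subrr subr0.
- apply/GRing.unitrP; exists (e *+ 2 - 1).
  have -> : (e *+ 2 - 1) * (e *+ 2 - 1) = 1.
    rewrite mulrBl mulrBr !mul1r mulr1 mulrnAl mulrnAr He -mulrnA opprB addrA.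
    by rewrite (_ : (2*2 = 2 + 2)%N) // mulrnDr addrK addrAC subrr add0r.
  by [].
- by rewrite mulr2n addrA addrC !addrA addrNK addNr add0r.
Qed.

Lemma sq0_nilp (R : unitRingType) (y : R) : y * y = 0 -> Defs.nilp y.
Proof. by move=> H; exists 2%N; rewrite expr2. Qed.

Lemma idem_nilp0 (R : unitRingType) (d : R) : d * (d * d) = d -> Defs.nilp d -> d = 0.
Proof.
move=> H3 [n Hn].
have Hk : forall k, d = d ^+ (2 * k).+1.
  elim=> [|k IH]; first by rewrite expr1.
  rewrite mulnS !addSn add0n !exprS -exprS -IH.
  by rewrite H3.
by rewrite (Hk n) (nil_high Hn) // mul2n -addnn ltnW // ltnS leq_addr.
Qed.

Theorem corollary2p5 (R : unitRingType) : CUNC R <-> (abelian_ring R /\ CSNC R).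
Proof.
have hab : CUNC R -> abelian_ring R.
  move=> H e He x.
  have [e0 [_ Hu]] := H e (idem_clean He).
  have He0 : e = e0 by apply: Hu => //; apply: sq0_nilp; rewrite subrr mulr0.
  have Ee : (1 - e) * e = 0 by rewrite mulrBl mul1r He subrr.
  have Ee' : e * (1 - e) = 0 by rewrite mulrBr mulr1 He subrr.
  have key : forall y, e * y + y * e = y -> y * y = 0 -> y = 0.
    move=> y Hy Hyy.
    have : e + y = e0.
      apply: Hu.
        rewrite /idem mulrDl !mulrDr He Hyy addr0 -addrA Hy //.
      by apply: sq0_nilp; rewrite opprD addrA subrr add0r mulrNN.
    by rewrite -He0 -{2}(addr0 e) => /addrI.
  have h1 : e * x * (1 - e) = 0.
    set y := e * x * (1 - e).
    have ey : e * y = y by rewrite /y !mulrA He.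
    have ye : y * e = 0 by rewrite /y -mulrA Ee mulr0.
    apply: key; first by rewrite ey ye addr0.
    by rewrite -{2}ey mulrA ye mul0r.
  have h2 : (1 - e) * x * e = 0.
    set z := (1 - e) * x * e.
    have ez : e * z = 0 by rewrite /z !mulrA Ee' !mul0r.
    have ze : z * e = z by rewrite /z -mulrA He.
    apply: key; first by rewrite ez ze add0r.
    by rewrite -{1}ze -mulrA ez mulr0.
  move/eqP: h1; rewrite mulrBr mulr1 subr_eq0 => /eqP ->.
  by move/eqP: h2; rewrite !mulrBl !mul1r subr_eq0 => /eqP ->.
split.
  move=> H; have Hab := hab H; split => // a Ha.
  have [e [[He Hq] _]] := H a Ha.
  by exists e, (a - e); split => //; split => //; split; [apply: Hab|rewrite addrC subrK].
move=> [Hab Hc] a Ha.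
have [e [q [He [Hq [_ ->]]]]] := Hc a Ha.
exists e; split; first by split => //; rewrite addrC addKr.
move=> f Hf Hfq.
have hd : Defs.nilp (e - f).
  have -> : e - f = (e + q - f) + - q by rewrite addrAC addrK.
  apply: nilp_add => //; last exact: nilp_opp.
  rewrite mulrN mulNr; congr (- _).
  by rewrite mulrBl mulrBr mulrDl mulrDr (Hab e He q) (Hab f Hf q).
apply/eqP; rewrite eq_sym -subr_eq0; apply/eqP; apply: idem_nilp0 hd.
have cef : e * f = f * e by apply: Hab.
have ge : e * (e * f) = e * f by rewrite mulrA He.
have gf : f * (e * f) = e * f by rewrite mulrA -cef -mulrA Hf.
have sq : (e - f) * (e - f) = e + f - e * f - e * f.
  rewrite mulrBl !mulrBr He Hf -cef opprB.
  by rewrite addrAC -!addrA; congr (_ + _); rewrite addrC addrA.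
rewrite sq; set g := e * f.
rewrite mulrBl !mulrBr !mulrDr He Hf -cef gf ge.
by rewrite addrK (addrC _ f) addrK opprB addrA subrK.
Qed.
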